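(* Let $\{a,b\}$ be a $2$-element generating set of a finite abelian group $G$, and let $P$ and $P'$ be spanning quasi-paths in $\mathrm{Cay}(G;a,b)$ such that $\delta_b(P)=\delta_b(P')$. If $P$ is a hamiltonian path, then $P'$ is also a hamiltonian path.
   Context: The Cayley digraph $\mathrm{Cay}(G;a,b)$ has vertex set $G$ and an arc from $v$ to $v+s$ for all $v\in G$, $s\in\{a,b\}$; such an arc is an $s$-edge, and $\delta_b(P)$ denotes the number of $b$-edges in a subdigraph $P$. A spanning quasi-path in a digraph is a spanning subdigraph such that exactly one connected component is a directed path and all other components are directed cycles. A hamiltonian path is a directed path visiting every vertex exactly once. *)

(* Defs.v *)
From HB Require Import structures.
From mathcomp Require Import all_boot all_order all_algebra.
Set Implicit Arguments. Unset Strict Implicit. Unset Printing Implicit Defensive.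
Import GRing.Theory.
Local Open Scope ring_scope.

(* A finite abelian group G is a finZmodType (written additively).
   An arc of Cay(G;a,b) is encoded as (v, c) : G * bool, meaning the arc
   from v to v + (if c then b else a); c = true marks a b-edge.
   A spanning subdigraph is a set of arcs (all vertices are included). *)

Section Cay.
Variable G : finZmodType.
Variables a b : G.

Definition step (c : bool) : G := if c then b else a.

Definition arc_ends (e : G * bool) : G * G := (e.1, e.1 + step e.2).

Definition is_cay_step (xy : G * G) : bool :=
  (xy.2 == xy.1 + a) || (xy.2 == xy.1 + b).

Definition path_pairs (s : seq G) : seq (G * G) := zip s (behead s).
Definition cycle_pairs (s : seq G) : seq (G * G) := zip s (rot 1 s).

Definition spanning_quasi_path (E : {set G * bool}) : Prop :=
  exists (p : seq G) (cs : seq (seq G)),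
    [/\ p != [::],
        all (fun c => c != [::]) cs,
        perm_eq (p ++ flatten cs) (enum G),
        all is_cay_step (path_pairs p ++ flatten (map cycle_pairs cs)) &
        forall e, (e \in E) =
          (arc_ends e \in path_pairs p ++ flatten (map cycle_pairs cs))].

Definition hamiltonian_path (E : {set G * bool}) : Prop :=
  exists p : seq G,
    [/\ perm_eq p (enum G),
        all is_cay_step (path_pairs p) &
        forall e, (e \in E) = (arc_ends e \in path_pairs p)].

Definition delta_b (E : {set G * bool}) : nat := #|[set e in E | e.2]|.

End Cay.

(* {a, b} generates G (subgroup generated = all integer combinations). *)
Definition generates2 (G : finZmodType) (a b : G) : Prop :=
  forall x : G, exists i j : int, x = a *~ i + b *~ j.

(* Main.v *)
Require Import Defs.
From HB Require Import structures.
From mathcomp Require Import all_boot all_order all_algebra.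
From mathcomp Require Import fingroup.
Set Implicit Arguments. Unset Strict Implicit. Unset Printing Implicit Defensive.
Import GRing.Theory FinRing.Theory.
Local Open Scope ring_scope.

Lemma per_ex (G : finZmodType) (y : G) : exists N, (0 < N)%N && (y *+ N == 0).
Proof. exists #[y]%g; by rewrite order_gt0 -zmodXgE expg_order eqxx. Qed.

Lemma int_nat (G : finZmodType) (y : G) (z : int) : exists r, y *~ z = y *+ r.
Proof.
case: z => n; first by exists n.
have [N /andP[N0 /eqP yN]] := per_ex y.
exists (N * n.+1 - n.+1)%N.
rewrite NegzE mulrNz -pmulrn mulrnBr ?leq_pmull // mulrnA yN mul0rn sub0r.
by [].
Qed.

Lemma id_a (V : zmodType) (T X A Dc Db Db' Dc' : V) :
  T + (X + (A - Dc)) + (Db + Dc) - (Db' + Dc') = T + X + Db - Db' + (A - Dc').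
Proof.
rewrite !opprD !addrA; congr (_ - _).
rewrite [T + X + A - Dc + Db]addrAC subrK.
by rewrite [RHS]addrAC [T + X + Db + A]addrAC.
Qed.
Lemma id_b (V : zmodType) (T X A Dc Db Db' Dc' : V) :
  Db + Dc = Db' + Dc' -> T + (X + (A - Dc)) + 0 - 0 = T + X + Db - Db' + (A - Dc').
Proof.
move=> e; rewrite addr0 subr0 -!addrA; congr (_ + (_ + _)).
have -> : Db = Db' + Dc' - Dc by rewrite -e addrK.
by rewrite -[Db' + Dc' - Dc]addrA addrACA subrr add0r addrC -addrA addKr.
Qed.

Section Main.
Variable G : finZmodType.
Variables a b : G.
Hypothesis ab : a != b.
Hypothesis gen : generates2 a b.

Definition d := a - b.
Lemma d_neq0 : d != 0. Proof. by rewrite subr_eq0. Qed.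
Lemma stepE c : step a b c = a - d *+ c.
Proof. by case: c; rewrite /step /d ?mulr1n ?mulr0n ?subr0 // opprB addrC subrK. Qed.
Lemma step_inj c c' : step a b c = step a b c' -> c = c'.
Proof. by case: c; case: c' => //= E; move: ab; rewrite E eqxx. Qed.

Definition k := ex_minn (per_ex d).
Lemma k_spec : (0 < k)%N /\ d *+ k = 0.
Proof. rewrite /k; case: ex_minnP => n /andP[? /eqP ?] _; by []. Qed.
Lemma k_min l : (0 < l)%N -> d *+ l = 0 -> (k <= l)%N.
Proof. move=> l0 dl; rewrite /k; case: ex_minnP => n _; apply; by rewrite l0 dl eqxx. Qed.

Lemma dmod l : d *+ l = d *+ (l %% k).
Proof.
have [_ dk] := k_spec.
by rewrite {1}(divn_eq l k) mulrnDr mulnC mulrnA dk mul0rn add0r.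
Qed.

Lemma d_inj l1 l2 : (l1 < k)%N -> (l2 < k)%N -> d *+ l1 = d *+ l2 -> l1 = l2.
Proof.
wlog le12 : l1 l2 / (l1 <= l2)%N.
  move=> W h1 h2 e; case: (leqP l1 l2) => h; first exact: W.
  by apply/esym/W => //; apply: ltnW.
move=> h1 h2 e; apply/eqP; rewrite eqn_leq le12 /=.
case: (posnP (l2 - l1)) => [/eqP|p]; first by rewrite subn_eq0.
have := k_min p; rewrite mulrnBr // e subrr => /(_ erefl) => H.
by move: (leq_ltn_trans H (leq_ltn_trans (leq_subr l1 l2) h2)); rewrite ltnn.
Qed.

Definition inH (x : G) := [exists l : 'I_k, x == d *+ l].
Lemma inHP x : reflect (exists l, x = d *+ l) (inH x).
Proof.
apply: (iffP existsP) => [[l /eqP ->]|[l ->]]; first by exists l.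
have [k0 _] := k_spec.
by exists (Ordinal (ltn_pmod l k0)); rewrite /= -dmod.
Qed.
Lemma inHP' x : inH x -> exists2 l, (l < k)%N & x = d *+ l.
Proof. by case/existsP=> l /eqP ->; exists l. Qed.
Lemma inHd l : inH (d *+ l). Proof. by apply/inHP; exists l. Qed.
Lemma inH0 : inH 0. Proof. by apply/inHP; exists 0%N. Qed.
Lemma inHD x y : inH x -> inH y -> inH (x + y).
Proof. by move=> /inHP[l ->] /inHP[l' ->]; rewrite -mulrnDr inHd. Qed.
Lemma inHN x : inH x -> inH (- x).
Proof.
move=> /inHP[l ->]; have [k0 dk] := k_spec.
apply/inHP; exists (l * k.-1)%N; apply/eqP; rewrite eq_sym -subr_eq0 opprK -mulrnDr.
by rewrite -{2}(muln1 l) -mulnDr addn1 prednK // mulnC mulrnA dk mul0rn.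
Qed.
Lemma inHB x y : inH x -> inH y -> inH (x - y).
Proof. by move=> hx hy; apply: inHD => //; apply: inHN. Qed.
Lemma inH_addr x h : inH h -> inH (x + h) = inH x.
Proof.
move=> hh; apply/idP/idP => hx; last exact: inHD.
by rewrite -(addrK h x); apply: inHB.
Qed.

Lemma exists_level x : exists r, inH (x - a *+ r).
Proof.
have [i [j ->]] := gen x.
have [r1 ->] := int_nat a i; have [r2 ->] := int_nat b j.
exists (r1 + r2)%N.
have -> : b = a - d by rewrite /d opprB addrC subrK.
rewrite mulrnBl mulrnDr.
have -> : a *+ r1 + (a *+ r2 - d *+ r2) - (a *+ r1 + a *+ r2) = - (d *+ r2).
  by apply/eqP; rewrite subr_eq addrA addrC.
exact: (inHN (inHd r2)).
Qed.

Lemma m_ex : exists r, (0 < r)%N && inH (a *+ r).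
Proof. have [N /andP[N0 /eqP aN]] := per_ex a; exists N; by rewrite N0 aN inH0. Qed.
Definition m := ex_minn m_ex.
Lemma m_spec : (0 < m)%N /\ inH (a *+ m).
Proof. rewrite /m; case: ex_minnP => n /andP[? ?] _; by []. Qed.
Lemma m_min r : (0 < r)%N -> inH (a *+ r) -> (m <= r)%N.
Proof. move=> r0 h; rewrite /m; case: ex_minnP => n _; apply; by rewrite r0 h. Qed.

Definition L x := ex_minn (exists_level x).
Lemma L_spec x : inH (x - a *+ L x).
Proof. rewrite /L; by case: ex_minnP. Qed.
Lemma L_min x r : inH (x - a *+ r) -> (L x <= r)%N.
Proof. rewrite /L; case: ex_minnP => n _; apply. Qed.
Lemma L_lt x : (L x < m)%N.
Proof.
rewrite ltnNge; apply/negP => h.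
have := L_min (x := x) (r := (L x - m)%N); rewrite mulrnBr //.
have [m0 hm] := m_spec.
rewrite opprB addrA addrAC.
move=> /(_ (inHD (L_spec x) hm)).
by rewrite leqNgt ltn_subrL m0 (leq_trans m0 h).
Qed.
Lemma L_uniq x r : (r < m)%N -> inH (x - a *+ r) -> L x = r.
Proof.
move=> rm h; apply/eqP; rewrite eqn_leq L_min //=; rewrite leqNgt; apply/negP => lt. 
have := m_min (r := (r - L x)%N); rewrite subn_gt0 lt mulrnBr; last exact: ltnW.
have -> : a *+ r - a *+ L x = (x - a *+ L x) - (x - a *+ r).
  by rewrite opprB [RHS]addrC addrA subrK.
move=> /(_ isT (inHB (L_spec x) h)).
by rewrite leqNgt (leq_ltn_trans (leq_subr _ _) rm).
Qed.
Lemma L_H x h : inH h -> L (x + h) = L x.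
Proof. by move=> hh; apply: L_uniq (L_lt x) _; rewrite addrAC inH_addr // L_spec. Qed.
Lemma L0 x : (L x == 0%N) = inH x.
Proof.
apply/eqP/idP => [h|h]; first by have := L_spec x; rewrite h subr0.
have [m0 _] := m_spec; by apply: L_uniq; rewrite ?subr0.
Qed.
Lemma L_a x : L (x + a) = if ((L x).+1 < m)%N then (L x).+1 else 0%N.
Proof.
case: ifP => h.
  by apply: L_uniq h _; rewrite mulrSr opprD addrA [x + a - _]addrAC addrK L_spec.
have [m0 hm] := m_spec.
have e : (L x).+1 = m by apply/eqP; rewrite eqn_leq L_lt leqNgt h.
apply: L_uniq m0 _; rewrite subr0.
have -> : x + a = (x - a *+ L x) + a *+ m by rewrite -e mulrSr addrA subrK.
by apply: inHD => //; apply: L_spec.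
Qed.
Lemma L_ar r : (r < m)%N -> L (a *+ r) = r.
Proof. by move=> rm; apply: L_uniq rm _; rewrite subrr inH0. Qed.

Definition isQP (E : {set G * bool}) (t : G) : Prop :=
  [/\ forall c, (t, c) \notin E,
      forall v, v != t -> exists c, (v, c) \in E,
      forall v c c', (v, c) \in E -> (v, c') \in E -> c = c' &
      forall v w c c', (v, c) \in E -> (w, c') \in E ->
         v + step a b c = w + step a b c' -> v = w].

Section QP.
Variables (E : {set G * bool}) (t : G).
Hypothesis HQ : isQP E t.

Definition s v := (v, true) \in E.
Lemma Es v c : ((v, c) \in E) = (v != t) && (c == s v).
Proof.
case: HQ => Et Eout Eu _.
case: (eqVneq v t) => [->|vt] /=; first by rewrite (negbTE (Et c)).
rewrite /s; case: c => /=; first by case: ((v, true) \in E).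
case: (boolP ((v, true) \in E)) => h /=.
  by apply/negP => h'; have := Eu _ _ _ h h'.
by have [[] hc] := Eout v vt; [rewrite hc in h|].
Qed.
Lemma st : s t = false.
Proof. by rewrite /s Es eqxx. Qed.

Definition f v := v + step a b (s v).

Lemma F1 v : v != t -> v + d != t -> ~~ s v -> ~~ s (v + d).
Proof.
move=> vt vdt nsv; apply/negP => svd.
case: HQ => _ _ _ Ei.
have h1 : (v, false) \in E by rewrite Es vt /= eq_sym (negbTE nsv).
have := Ei _ _ _ _ h1 svd; rewrite /step /d -addrA subrK => /(_ erefl) e.
have : v + 0 = v + (a - b) by rewrite addr0 {1}e.
by move/addrI/esym/eqP; rewrite -/d (negbTE d_neq0).
Qed.

Lemma nt v h : ~~ inH (v - t) -> inH h -> v + h != t.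
Proof.
move=> nv hh; apply/eqP => e; move: nv; rewrite -(inH_addr _ hh) addrAC e subrr.
by rewrite inH0.
Qed.

Lemma unif v : ~~ inH (v - t) -> s (v + d) = s v.
Proof.
move=> nv.
have vt : v != t by have := nt nv inH0; rewrite addr0.
case: (boolP (s v)) => sv; last by apply/negbTE/F1 => //; exact: (nt nv (inHd 1)).
apply/negPn/negP => nsd.
have H l : ~~ s (v + d *+ l.+1).
  elim: l => [|l IH]; first by rewrite mulr1n.
  rewrite mulrSr addrA; apply: F1 => //; first exact: (nt nv (inHd _)).
  by rewrite -addrA -mulrSr; exact: (nt nv (inHd _)).
have [k0 dk] := k_spec.
by move: (H k.-1); rewrite prednK // dk addr0 sv.
Qed.

Lemma unif_l v l : ~~ inH (v - t) -> s (v + d *+ l) = s v.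
Proof.
move=> nv; elim: l => [|l IH]; first by rewrite mulr0n addr0.
rewrite mulrSr addrA unif ?IH //.
by rewrite addrAC inH_addr // inHd.
Qed.

Definition col r := s (t + a *+ r).

Lemma split3 (x y z : G) : y + z + (x - y - z) = x.
Proof. by rewrite -[x - y - z]addrA -opprD (addrC (y + z)) subrK. Qed.

Lemma s_col v : ~~ inH (v - t) -> s v = col (L (v - t)).
Proof.
move=> nv; have [l _ e] := inHP' (L_spec (v - t)).
have ev : v = t + a *+ L (v - t) + d *+ l by rewrite -e split3.
rewrite {1}ev unif_l //.
rewrite addrAC subrr add0r -L0 L_ar ?L_lt //.
by rewrite L0.
Qed.

Definition P l := s (t + d *+ l).
Definition j := (\sum_(1 <= l < k) P l)%N.

Lemma tdl_neq l : (0 < l < k)%N -> t + d *+ l != t.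
Proof.
case/andP => l0 lk; apply/eqP => e.
have : d *+ l = d *+ 0 by rewrite mulr0n; apply: (addrI t); rewrite addr0 e.
move/d_inj => /(_ lk (leq_ltn_trans (leq0n _) lk)) l00.
by rewrite l00 in l0.
Qed.

Lemma Pup l : (0 < l)%N -> (l.+1 < k)%N -> ~~ P l -> ~~ P l.+1.
Proof.
move=> l0 lk nP; rewrite /P mulrSr addrA; apply: F1 => //.
  by apply: tdl_neq; rewrite l0 ltnW.
by rewrite -addrA -mulrSr; apply: tdl_neq; rewrite lk.
Qed.

Lemma Pup_gen l l' : (0 < l)%N -> (l <= l')%N -> (l' < k)%N -> ~~ P l -> ~~ P l'.
Proof.
move=> l0; elim: l' => [|l' IH] ll' lk nP; first by move: (leq_trans l0 ll').
case: (eqVneq l l'.+1) => [<-|ne] //.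
have ll2 : (l <= l')%N by rewrite -ltnS ltn_neqAle ne ll'.
by apply: Pup => //; [exact: leq_trans l0 ll2 | apply: IH => //; apply: ltnW].
Qed.

Lemma pattern l : (0 < l < k)%N -> P l = (l <= j)%N.
Proof.
case/andP => l0 lk.
case: (boolP (P l)) => Pl.
  rewrite /j (@big_cat_nat _ _ _ l.+1) //=.
  rewrite (@eq_big_nat _ _ _ 1 l.+1 _ (fun _ => 1%N)); last first.
    move=> i /andP[i1 il]; apply/eqP; rewrite eqb1; apply/negPn/negP => nPi.
    by move: Pl; apply/negP; apply: (Pup_gen i1) => //; rewrite -ltnS.
  by rewrite sum_nat_const_nat muln1 subn1 /= leq_addr.
rewrite /j (@big_cat_nat _ _ _ l) //=; last by apply: ltnW.
rewrite (@big1_seq _ _ _ _ (index_iota l k)); last first.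
  move=> i /andP[_]; rewrite mem_index_iota => /andP[li ik].
  by apply/eqP; rewrite eqb0; apply: (Pup_gen l0 li ik).
rewrite addn0; apply/esym/negbTE; rewrite -ltnNge.
apply: (@leq_ltn_trans (\sum_(1 <= i < l) 1)%N).
  by apply: leq_sum => i _; apply: leq_b1.
by rewrite sum_nat_const_nat muln1 subn1 prednK.
Qed.

Lemma j_lt : (j < k)%N.
Proof.
have [k0 _] := k_spec.
apply: (@leq_ltn_trans (\sum_(1 <= i < k) 1)%N).
  by apply: leq_sum => i _; apply: leq_b1.
by rewrite sum_nat_const_nat muln1 subn1 prednK.
Qed.

Definition beta r := (\sum_(1 <= q < r) col q)%N.
Lemma beta0 : beta 0 = 0%N. Proof. by rewrite /beta big_geq. Qed.
Lemma beta1 : beta 1 = 0%N. Proof. by rewrite /beta big_geq. Qed.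
Lemma betaS r : (0 < r)%N -> beta r.+1 = (beta r + col r)%N.
Proof. by move=> r0; rewrite /beta big_nat_recr. Qed.

Lemma level_set r : (r < m)%N ->
  [set x | L x == r] = (fun i : 'I_k => a *+ r + d *+ i) @: [set: 'I_k].
Proof.
move=> rm; apply/setP => x; rewrite inE; apply/eqP/imsetP.
  move=> Lx; have [l lk e] := inHP' (L_spec x).
  exists (Ordinal lk); first by rewrite inE.
  by rewrite /= -e Lx addrC subrK.
by case=> i _ ->; rewrite L_H ?inHd // L_ar.
Qed.

Lemma sum_level r (F : G -> nat) : (r < m)%N ->
  (\sum_(x | L x == r) F x = \sum_(i < k) F (a *+ r + d *+ i)%R)%N.
Proof.
move=> rm.
have inj : {in [set: 'I_k] &, injective (fun i : 'I_k => a *+ r + d *+ i)}.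
  move=> i i' _ _ /addrI /d_inj.
  by move=> /(_ (ltn_ord i) (ltn_ord i')) /val_inj.
rewrite (eq_bigl (fun x => x \in [set x | L x == r])); last by move=> x; rewrite inE.
rewrite level_set // big_imset //=.
by apply: eq_bigl => i; rewrite inE.
Qed.

Lemma delta_eq : delta_b E = (j + k * beta m)%N.
Proof.
have -> : delta_b E = #|[set v | s v]|.
  rewrite /delta_b.
  have -> : [set e in E | e.2] = (fun v => (v, true)) @: [set v | s v].
    apply/setP => [[v c]]; rewrite !inE /=; apply/idP/imsetP.
      case/andP => h hc; move: hc h => -> h; exists v => //; by rewrite inE.
    by case=> w; rewrite inE => sw [-> ->]; rewrite andbT.
  by rewrite card_imset // => x y [].
rewrite -sum1_card big_mkcond /=.
rewrite (eq_bigr (fun v => nat_of_bool (s v))); last by move=> v _; rewrite inE; case: (s v).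
rewrite (reindex_inj (addrI t)) /=.
rewrite (partition_big (fun x => Ordinal (L_lt x)) xpredT) //=.
have [m0 _] := m_spec; have [k0 _] := k_spec.
rewrite (eq_bigr (fun r : 'I_m => \sum_(i < k) nat_of_bool (s (t + (a *+ r + d *+ i))%R)))%N; last first.
  move=> r _; rewrite -(sum_level (fun x => nat_of_bool (s (t + x))) (ltn_ord r)).
  by apply: eq_bigl => x /=; apply/eqP/eqP => [<-|h] //; apply: val_inj.
rewrite -(big_mkord xpredT (fun r => \sum_(i < k) nat_of_bool (s (t + (a *+ r + d *+ i))%R)))%N.
rewrite big_ltn //; congr (_ + _)%N.
  rewrite -(big_mkord xpredT (fun i => nat_of_bool (s (t + (a *+ 0 + d *+ i))))) big_ltn //.
  rewrite mulr0n !add0r mulr0n addr0 st add0n.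
  rewrite /j /P; apply: eq_bigr => i _; by rewrite add0r.
rewrite /beta (big_distrr (times := muln) (plus := addn)) /=; apply: eq_big_nat => r /andP[r1 rm].
have e (i : 'I_k) : s (t + (a *+ r + d *+ i)) = col r.
  rewrite s_col; first by rewrite (addrC t) addrK L_H ?inHd // L_ar.
  by rewrite (addrC t) addrK -L0 L_H ?inHd // L_ar // -lt0n.
under eq_bigr => i _ do rewrite e.
by rewrite big_const_ord iter_addn_0 mulnC.
Qed.

Lemma j_mod : j = (delta_b E %% k)%N.
Proof. by rewrite delta_eq addnC mulnC modnMDl modn_small // j_lt. Qed.
Lemma beta_div : beta m = (delta_b E %/ k)%N.
Proof.
have [k0 _] := k_spec.
by rewrite delta_eq addnC mulnC divnMDl // divn_small ?j_lt // addn0.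
Qed.
End QP.

Section Iso.
Variables (E E' : {set G * bool}) (t t' : G).
Hypotheses (HQ : isQP E t) (HQ' : isQP E' t').
Hypotheses (hj : j E t = j E' t') (hB : beta E t m = beta E' t' m).

Definition phi v := t' + (v - t) + d *+ beta E t (L (v - t)) - d *+ beta E' t' (L (v - t)).

Lemma phiH v : phi v - t' =
  (v - t) + (d *+ beta E t (L (v - t)) - d *+ beta E' t' (L (v - t))).
Proof.
have -> : phi v = t' + ((v - t) + (d *+ beta E t (L (v - t)) - d *+ beta E' t' (L (v - t)))).
  by rewrite /phi !addrA.
by rewrite addrC addKr.
Qed.

Lemma L_phi v : L (phi v - t') = L (v - t).
Proof. by rewrite phiH L_H // inHB // inHd. Qed.

Lemma phi_inj : injective phi.
Proof.
move=> v w e.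
have Lvw : L (v - t) = L (w - t) by rewrite -L_phi e L_phi.
have : phi v - t' = phi w - t' by rewrite e.
by rewrite !phiH Lvw => /addIr /addIr.
Qed.

Lemma phi_t : phi t = t'.
Proof.
have L00 : L (t - t) = 0%N by apply/eqP; rewrite L0 subrr inH0.
by rewrite /phi L00 !beta0 !mulr0n subrr !addr0 subr0.
Qed.

Lemma phi_neq v : (phi v == t') = (v == t).
Proof. by rewrite -phi_t (inj_eq phi_inj). Qed.

Lemma phi_surj y : exists x, y = phi x.
Proof. by have /codomP[x ->] := inj_card_onto phi_inj (leqnn _) y; exists x. Qed.

Lemma phi_f v : v != t -> phi (f E v) = f E' (phi v).
Proof.
move=> vt; rewrite /f.
have fvt : v + step a b (s E v) - t = (v - t) + (a - d *+ s E v) by rewrite stepE addrAC.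
have Lf : L ((v - t) + (a - d *+ s E v)) =
    if ((L (v - t)).+1 < m)%N then (L (v - t)).+1 else 0%N.
  by rewrite addrA (L_H _ (inHN (inHd _))) L_a.
rewrite /phi fvt Lf !stepE.
case hx: (inH (v - t)).
  have [l lk xe] := inHP' hx.
  have Lx0 : L (v - t) = 0%N by apply/eqP; rewrite L0.
  have l0 : (0 < l)%N.
    rewrite lt0n; apply/negP => /eqP l00; move: vt; rewrite l00 mulr0n in xe.
    by move/eqP: xe; rewrite subr_eq0 => ->.
  have ve : v = t + d *+ l by rewrite -xe addrC subrK.
  have phiv : t' + (v - t) + d *+ beta E t (L (v - t)) - d *+ beta E' t' (L (v - t))
      = t' + d *+ l by rewrite Lx0 !beta0 !mulr0n addr0 subr0 xe.
  rewrite phiv.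
  have -> : s E' (t' + d *+ l) = s E v.
    rewrite ve; have := pattern HQ' (l := l); rewrite /P => ->; last by rewrite l0.
    by have := pattern HQ (l := l); rewrite /P => ->; [rewrite hj | rewrite l0].
  have -> : d *+ beta E t (if ((L (v - t)).+1 < m)%N then (L (v - t)).+1 else 0%N)
          = d *+ beta E' t' (if ((L (v - t)).+1 < m)%N then (L (v - t)).+1 else 0%N).
    by rewrite Lx0; case: ifP => _; rewrite ?beta1 ?beta0.
  by rewrite addrK xe addrA.
have nx : ~~ inH (v - t) by rewrite hx.
have nphi : ~~ inH (phi v - t') by rewrite -L0 L_phi L0.
have r0 : (0 < L (v - t))%N by rewrite lt0n L0.
rewrite (s_col HQ nx) (s_col HQ' nphi) L_phi.
case: ifP => h.
  rewrite !betaS // !mulrnDr; exact: id_a.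
have e : (L (v - t)).+1 = m by apply/eqP; rewrite eqn_leq L_lt leqNgt h.
move: hB; rewrite -e !betaS // => hB'.
rewrite !beta0 !mulr0n; apply: id_b.
by rewrite -!mulrnDr hB'.
Qed.

Lemma pair_f p : all (is_cay_step a b) (path_pairs p) ->
  (forall e, (e \in E) = (arc_ends a b e \in path_pairs p)) ->
  forall x y, (x, y) \in path_pairs p -> x != t /\ y = f E x.
Proof.
move=> hall hE x y hxy.
have := allP hall _ hxy; rewrite /is_cay_step /= => /orP[/eqP ey|/eqP ey].
  have : (x, false) \in E by rewrite hE /arc_ends /= -ey.
  by rewrite (Es HQ) => /andP[xt /eqP c]; split => //; rewrite /f -c ey.
have : (x, true) \in E by rewrite hE /arc_ends /= -ey.
by rewrite (Es HQ) => /andP[xt /eqP c]; split => //; rewrite /f -c ey.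
Qed.

Lemma f_pair p : (forall e, (e \in E) = (arc_ends a b e \in path_pairs p)) ->
  forall x, x != t -> (x, f E x) \in path_pairs p.
Proof.
move=> hE x xt; have -> : (x, f E x) = arc_ends a b (x, s E x) by [].
by rewrite -hE (Es HQ) xt eqxx.
Qed.

Lemma zip_map_pp (p : seq G) :
  path_pairs (map phi p) = map (fun xy => (phi xy.1, phi xy.2)) (path_pairs p).
Proof.
rewrite /path_pairs; case: p => //= x p; elim: p x => //= y p IH x.
by rewrite IH.
Qed.

Lemma ham_transfer : hamiltonian_path a b E -> hamiltonian_path a b E'.
Proof.
case=> p [pp hall hE]; exists (map phi p); split.
- apply: uniq_perm; rewrite ?enum_uniq //.
    by rewrite (map_inj_uniq phi_inj) (perm_uniq pp) enum_uniq.
  move=> y; rewrite mem_enum; have [x ->] := phi_surj y.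
  rewrite mem_map; last exact: phi_inj.
  by have := perm_mem pp x; rewrite mem_enum => ->.
- rewrite zip_map_pp all_map; apply/allP => [[x y]] hxy /=.
  have [xt ->] := pair_f hall hE hxy.
  by rewrite phi_f // /f /is_cay_step /=; case: (s E' _); rewrite /step eqxx ?orbT.
- move=> [v c]; rewrite (Es HQ') zip_map_pp /arc_ends /=; apply/andP/mapP.
    case=> vt /eqP ->; have [x ev] := phi_surj v.
    have xt : x != t by rewrite -phi_neq -ev.
    exists (x, f E x); first exact: f_pair.
    by rewrite /= phi_f // -ev.
  case=> [[x y]] hxy [ev ey]; have [xt fy] := pair_f hall hE hxy.
  rewrite ev phi_neq xt; split => //; apply/eqP.
  move: ey; rewrite /= fy phi_f // /f -ev => /addrI; exact: step_inj.
Qed.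
End Iso.

Lemma uniq_map_eq (T1 T2 : eqType) (h : T1 -> T2) (sq : seq T1) u v :
  uniq (map h sq) -> u \in sq -> v \in sq -> h u = h v -> u = v.
Proof.
elim: sq => //= z sq IH /andP[hz us]; rewrite !in_cons.
case/orP=> [/eqP->|us'] /orP[/eqP->|vs'] // e.
- by move: hz; rewrite e (map_f h vs').
- by move: hz; rewrite -e (map_f h us').
- exact: IH.
Qed.

Lemma unzip1_pp (x : G) q : unzip1 (zip (x :: q) q) = belast x q.
Proof. by elim: q x => //= y q IH x; rewrite IH. Qed.

Lemma sqp_QP E : spanning_quasi_path a b E -> exists t, isQP E t.
Proof.
case=> p [cs [pn0 _ pv hall hE]].
case: p pn0 pv hall hE => // x q _ pv hall hE.
set Pairs := path_pairs (x :: q) ++ flatten (map (@cycle_pairs G) cs).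
have U1 : unzip1 Pairs = belast x q ++ flatten cs.
  rewrite /Pairs /unzip1 map_cat; congr (_ ++ _); first exact: unzip1_pp.
  clear Pairs; elim: cs {pv hall hE} => //= c cs IH; rewrite map_cat IH; congr (_ ++ _).
  by apply: unzip1_zip; rewrite size_rot.
have U2 : unzip2 Pairs = q ++ flatten (map (rot 1) cs).
  rewrite /Pairs /unzip2 map_cat; congr (_ ++ _); first by apply: unzip2_zip => /=.
  clear U1 Pairs; elim: cs {pv hall hE} => //= c cs IH; rewrite map_cat IH; congr (_ ++ _).
  by apply: unzip2_zip; rewrite size_rot.
have uV : uniq (x :: q ++ flatten cs) by rewrite (perm_uniq pv) enum_uniq.
have mV v : v \in x :: q ++ flatten cs by rewrite (perm_mem pv) mem_enum.
have uV' : uniq (last x q :: belast x q ++ flatten cs).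
  have hp : perm_eq (belast x q ++ [:: last x q] ++ flatten cs)
                    ([:: last x q] ++ belast x q ++ flatten cs) by rewrite perm_catCA.
  by rewrite -cat1s -(perm_uniq hp) cat1s -cat_rcons -lastI.
have u1 : uniq (unzip1 Pairs) by rewrite U1; case/andP: uV'.
have tn : last x q \notin unzip1 Pairs by rewrite U1; case/andP: uV'.
have u2 : uniq (unzip2 Pairs).
  rewrite U2; case/andP: uV => _.
  suff pq : perm_eq (q ++ flatten (map (rot 1) cs)) (q ++ flatten cs).
    by rewrite (perm_uniq pq).
  rewrite perm_cat2l; clear -cs; elim: cs => //= c cs IH.
  by apply: perm_cat => //; rewrite perm_rot.
have arcP e : (e \in E) = (arc_ends a b e \in Pairs) by rewrite hE.
exists (last x q); split.
- move=> c; apply/negP; rewrite arcP => h.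
  by move/negP: tn; apply; exact: (map_f fst h).
- move=> v vt; have : v \in unzip1 Pairs.
    move: (mV v); rewrite -cat_cons lastI cat_rcons mem_cat in_cons (negbTE vt) /=.
    by rewrite U1 mem_cat.
  case/mapP=> [[v' y]] hp /= ev; subst v'.
  have := allP hall _ hp; rewrite /is_cay_step /= => /orP[/eqP ey|/eqP ey].
    by exists false; rewrite arcP /arc_ends /= -ey.
  by exists true; rewrite arcP /arc_ends /= -ey.
- move=> v c c' h h'; rewrite arcP in h; rewrite arcP in h'.
  have := uniq_map_eq u1 h h' erefl; case => /addrI; exact: step_inj.
- move=> v w c c' h h' e; rewrite arcP in h; rewrite arcP in h'.
  by have := uniq_map_eq u2 h h' e; case.
Qed.
End Main.

Theorem mainTheorem18 (G : finZmodType) (a b : G) (E E' : {set G * bool}) :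
  a != b -> generates2 a b ->
  spanning_quasi_path a b E -> spanning_quasi_path a b E' ->
  delta_b E = delta_b E' ->
  hamiltonian_path a b E -> hamiltonian_path a b E'.
Proof.
move=> ab gen hE hE' hd.
have [t HQ] := sqp_QP ab hE; have [t' HQ'] := sqp_QP ab hE'.
apply: (ham_transfer ab gen HQ HQ').
  by rewrite (j_mod ab gen HQ) (j_mod ab gen HQ') hd.
by rewrite (beta_div ab gen HQ) (beta_div ab gen HQ') hd.
Qed.
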